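(* Let $K_1,K_2$ be knots in $S^3$. If $r\in js(K_1\sharp K_2)$, then there exist $r_1\in js(K_1)$ and $r_2\in js(K_2)$ with $r=r_1+r_2$.
   Context: The colored Jones function of $K$ is the sequence $J_{K,n}(q)\in\mathbb{Z}[q^{\pm1}]$, $n\in\mathbb{N}$ (normalized so that the unknot has $J_n=1$ and $J_{K,2}$ is the Jones polynomial); it satisfies $J_{K_1\sharp K_2,n}=J_{K_1,n}J_{K_2,n}$. $\delta_K(n)$ is the maximum $q$-degree of $J_{K,n}(q)$; it is a quadratic quasi-polynomial $c_2(n)n^2+c_1(n)n+c_0(n)$ with rational-valued periodic functions $c_i$ of integral period. $js(K)$ is the set of cluster points (limits of subsequences) of $\{4\delta_K(n)/n^2\}_{n\in\mathbb{N}}$, which equals the finite set of values of $4c_2(n)$. *)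

(* Defs.v *)
From HB Require Import structures.
From mathcomp Require Import all_boot all_order all_algebra.
Set Implicit Arguments. Unset Strict Implicit. Unset Printing Implicit Defensive.
Import Order.TTheory GRing.Theory Num.Theory.
Local Open Scope ring_scope.

(** Laurent polynomials in q with integer coefficients, represented as pairs
    (p, k) standing for q^{-k} * p(q), p : {poly int}.  The representation is
    not unique; equality of Laurent polynomials is [laurent_eq]. *)
Definition laurent := ({poly int} * nat)%type.

Definition laurent_eq (a b : laurent) : Prop :=
  a.1 * 'X^(b.2) = b.1 * 'X^(a.2).

Definition laurent_mul (a b : laurent) : laurent := (a.1 * b.1, (a.2 + b.2)%N).

Definition laurent_nz (a : laurent) : bool := a.1 != 0.

Definition maxdeg (a : laurent) : int := (size a.1)%:Z - 1 - (a.2)%:Z.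

Definition periodic (c : nat -> rat) : Prop :=
  exists P : nat, (0 < P)%N /\ forall n, c (n + P)%N = c n.

Definition quadratic_quasi_poly (d : nat -> int) : Prop :=
  exists c2 c1 c0 : nat -> rat,
    [/\ periodic c2, periodic c1, periodic c0 &
      forall n : nat, (0 < n)%N ->
        (d n)%:~R = c2 n * (n%:R ^+ 2) + c1 n * n%:R + c0 n].

Definition cluster_point (R : realFieldType) (x : nat -> R) (r : R) : Prop :=
  forall eps : R, 0 < eps -> forall N : nat,
    exists n : nat, (N <= n)%N /\ `|x n - r| < eps.

Definition js (R : realFieldType) (J : nat -> laurent) (r : R) : Prop :=
  cluster_point (fun n : nat => (4 * maxdeg (J n))%:~R / (n%:R ^+ 2)) r.

(* Main.v *)
Require Import Defs.
From HB Require Import structures.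
From mathcomp Require Import all_boot all_order all_algebra.
From mathcomp Require Import zify ring lra.
Import Order.TTheory GRing.Theory Num.Theory.
Local Open Scope ring_scope.
Lemma maxdeg_mul (a b c : laurent) : laurent_nz a -> laurent_nz b -> laurent_nz c ->
  laurent_eq a (laurent_mul b c) -> maxdeg a = maxdeg b + maxdeg c.
Proof.
rewrite /laurent_nz /laurent_eq /laurent_mul /maxdeg /= => a0 b0 c0 h.
have := congr1 (fun p : {poly int} => size p) h => /=.
rewrite size_mulXn // size_mulXn ?mulf_neq0 // size_mul //.
move: a0 b0 c0; rewrite -!size_poly_gt0 => a0 b0 c0.
move=> H.
move: H a0 b0 c0; move: (size a.1) (size b.1) (size c.1) a.2 b.2 c.2 => x y z u v w. intros. lia. Qed.

Lemma per_mulP (T : Type) (f : nat -> T) P : (forall n, f (n + P)%N = f n) ->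
  forall k n, f (n + k * P)%N = f n.
Proof.
move=> h; elim=> [|k IH] n; first by rewrite mul0n addn0.
by rewrite mulSn (addnC P) addnA h IH.
Qed.

Lemma per_mod (T : Type) (f : nat -> T) P : (forall n, f (n + P)%N = f n) ->
  forall n, f n = f (n %% P)%N.
Proof. by move=> h n; rewrite {1}(divn_eq n P) addnC per_mulP. Qed.

Lemma class_cluster (R : archiRealFieldType) (x a C : nat -> R) L : (0 < L)%N ->
  (forall n, a (n + L)%N = a n) -> (forall n, C (n + L)%N = C n) ->
  (forall n, (0 < n)%N -> `|x n - a n| <= C n / n%:R) ->
  forall j, cluster_point x (a j).
Proof.
move=> L0 pa pC hb j eps e0 N.
set M := Num.bound (`|C j| / eps).
have hn : (0 < j + (N + M).+1 * L)%N by nia.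
exists (j + (N + M).+1 * L)%N; split; first by nia.
have := hb _ hn; rewrite (@per_mulP _ _ _ pa) (@per_mulP _ _ _ pC) => h; apply: le_lt_trans h _.
rewrite ltr_pdivrMr ?ltr0n //.
have : `|C j| / eps < M%:R := archi_boundP (divr_ge0 (normr_ge0 _) (ltW e0)).
rewrite ltr_pdivrMr // => h1.
apply: le_lt_trans (ler_norm _) _; apply: lt_le_trans h1 _.
rewrite mulrC ler_pM2l // ler_nat; nia.
Qed.

Lemma min_pos (R : realFieldType) (f : nat -> R) m :
  (forall j, (j < m)%N -> 0 < f j) -> exists e, 0 < e /\ forall j, (j < m)%N -> e <= f j.
Proof.
elim: m => [|m IH] h; first by exists 1; split.
have [e [e0 he]] : exists e, 0 < e /\ forall j, (j < m)%N -> e <= f j.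
  by apply: IH => j jm; apply: h; apply: ltnW.
exists (Num.min e (f m)); split; first by rewrite lt_min e0 h.
move=> j; rewrite ltnS leq_eqVlt => /orP [/eqP -> | jm]; first by rewrite ge_min lexx orbT.
by rewrite ge_min he.
Qed.

Lemma max_bound (R : realFieldType) (f : nat -> R) m :
  exists B, forall j, (j < m)%N -> f j <= B.
Proof.
elim: m => [|m [B hB]]; first by exists 0.
exists (Num.max B (f m)) => j; rewrite ltnS leq_eqVlt => /orP [/eqP -> | jm].
  by rewrite le_max lexx orbT.
by rewrite le_max hB.
Qed.
Lemma key (R : archiRealFieldType) (x x1 x2 a1 a2 C1 C2 : nat -> R) (L : nat) (r : R) :
  (0 < L)%N ->
  (forall n, a1 (n + L)%N = a1 n) -> (forall n, C1 (n + L)%N = C1 n) ->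
  (forall n, a2 (n + L)%N = a2 n) -> (forall n, C2 (n + L)%N = C2 n) ->
  (forall n, (0 < n)%N -> `|x1 n - a1 n| <= C1 n / n%:R) ->
  (forall n, (0 < n)%N -> `|x2 n - a2 n| <= C2 n / n%:R) ->
  (forall n, (0 < n)%N -> x n = x1 n + x2 n) ->
  cluster_point x r ->
  exists r1 r2, [/\ cluster_point x1 r1, cluster_point x2 r2 & r = r1 + r2].
Proof.
move=> L0 pa1 pC1 pa2 pC2 hb1 hb2 hx hr.
case: (boolP [exists j : 'I_L, r == a1 j + a2 j]).
  move=> /existsP [j /eqP ->]; exists (a1 j), (a2 j); split => //.
    exact: (@class_cluster _ _ _ _ _ L0 pa1 pC1 hb1).
  exact: (@class_cluster _ _ _ _ _ L0 pa2 pC2 hb2).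
move=> hne; exfalso.
have [e [e0 he]] : exists e, 0 < e /\ forall j, (j < L)%N -> e <= `|r - (a1 j + a2 j)|.
  apply: min_pos => j jL; rewrite normr_gt0 subr_eq0.
  apply/negP => /eqP ej; move/negP: hne; apply; apply/existsP; exists (Ordinal jL).
  by rewrite /= ej.
have [B hB] := @max_bound _ (fun j => C1 j + C2 j) L.
have [n [Nn hn]] := hr (e / 2) (divr_gt0 e0 (ltr0Sn _ 1)) (Num.bound (2 * `|B| / e)).
have n0 : (0 < n)%N by apply: leq_trans Nn; rewrite /Num.bound /Num.Def.archi_bound.
have jL : (n %% L < L)%N by rewrite ltn_pmod.
have := he _ jL; have := hB _ jL => /=.
rewrite -(@per_mod _ _ _ pa1 n) -(@per_mod _ _ _ pa2 n) -(@per_mod _ _ _ pC1 n) -(@per_mod _ _ _ pC2 n) => hBn hen.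
have tri : `|r - (a1 n + a2 n)| <= `|r - x n| + `|x1 n - a1 n| + `|x2 n - a2 n|.
  have -> : r - (a1 n + a2 n) = (r - x n) + (x1 n - a1 n) + (x2 n - a2 n).
    by rewrite hx //; ring.
  by apply: le_trans (ler_normD _ _) _; rewrite lerD2r ler_normD.
have h1 := hb1 _ n0; have h2 := hb2 _ n0.
have nR : 0 < n%:R :> R by rewrite ltr0n.
have hbd : (C1 n + C2 n) / n%:R < e / 2.
  rewrite ltr_pdivrMr //.
  have : 2 * `|B| / e < (Num.bound (2 * `|B| / e))%:R.
    apply: archi_boundP; apply: divr_ge0; [apply: mulr_ge0 => // | exact: ltW].
  rewrite ltr_pdivrMr // => hb.
  have : (Num.bound (2 * `|B| / e))%:R <= n%:R :> R by rewrite ler_nat.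
  move=> hN.
  have hBB : B <= `|B| := ler_norm B.
  have : (Num.bound (2 * `|B| / e))%:R * e <= n%:R * e by rewrite ler_pM2r.
  move=> hNe.
  have -> : e / 2 * n%:R = (n%:R * e) / 2 by ring.
  lra.
have : C1 n / n%:R + C2 n / n%:R = (C1 n + C2 n) / n%:R by rewrite mulrDl.
rewrite distrC in hn.
lra.
Qed.
Lemma rat_bound (c1 c0 m : rat) : 1 <= m ->
  `|(4 * c1 + 4 * c0 / m) / m| <= 4 * (`|c1| + `|c0|) / m.
Proof.
move=> m1; have m0 : 0 < m by apply: lt_le_trans m1.
rewrite normrM normfV (ger0_norm (ltW m0)) ler_pM2r ?invr_gt0 //.
apply: le_trans (ler_normD _ _) _.
rewrite !normrM normfV (ger0_norm (ltW m0)) (ger0_norm (_ : 0 <= 4)) //.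
have h : `|c0| * m^-1 <= `|c0|.
  rewrite ler_pdivrMr //; have := normr_ge0 c0; nra.
have e : 4 * `|c0| * m^-1 = 4 * (`|c0| * m^-1) by rewrite mulrA.
rewrite e; lra.
Qed.

Lemma per_dvd (T : Type) (f : nat -> T) P M : (forall n, f (n + P)%N = f n) ->
  (P %| M)%N -> forall n, f (n + M)%N = f n.
Proof. by move=> h /dvdnP [k ->]; apply: per_mulP. Qed.

Lemma knot_bound (R : archiRealFieldType) (d : nat -> int) : quadratic_quasi_poly d ->
  exists L (a C : nat -> R), [/\ (0 < L)%N, (forall n, a (n + L)%N = a n),
    (forall n, C (n + L)%N = C n) &
    forall n, (0 < n)%N -> `|(4 * d n)%:~R / n%:R ^+ 2 - a n| <= C n / n%:R].
Proof.
case=> c2 [c1 [c0 [[P2 [P20 h2]] [P1 [P10 h1]] [P0 [P00 h0]] hd]]].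
exists (P2 * P1 * P0)%N, (fun n => ratr (4 * c2 n)),
  (fun n => ratr (4 * (`|c1 n| + `|c0 n|))); split.
- by rewrite !muln_gt0 P20 P10 P00.
- move=> n; rewrite (@per_dvd _ _ _ _ h2) //.
  by rewrite -mulnA dvdn_mulr.
- move=> n; rewrite (@per_dvd _ _ _ _ h1) ?(@per_dvd _ _ _ _ h0) //.
    by rewrite dvdn_mull.
  by rewrite mulnAC dvdn_mull.
move=> n n0.
have m1 : 1 <= n%:R :> rat by rewrite ler1n.
have m0 : n%:R != 0 :> rat by rewrite pnatr_eq0 -lt0n.
have E : (4 * d n)%:~R / n%:R ^+ 2 - ratr (4 * c2 n) =
   ratr ((4 * c1 n + 4 * c0 n / n%:R) / n%:R) :> R.
  have -> : (4 * c1 n + 4 * c0 n / n%:R) / n%:R =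
     (4 * d n)%:~R / n%:R ^+ 2 - 4 * c2 n.
    rewrite intrM hd //. field. by rewrite m0.
  by rewrite rmorphB /= fmorph_div rmorphXn /= ratr_int rmorph_nat.
have E2 : ratr (4 * (`|c1 n| + `|c0 n|)) / n%:R =
   ratr (4 * (`|c1 n| + `|c0 n|) / n%:R) :> R.
  by rewrite fmorph_div rmorph_nat.
by rewrite E E2 -ratr_norm ler_rat rat_bound.
Qed.

Theorem lemma2p1
  (R : archiRealFieldType)
  (Knot : Type) (connected_sum : Knot -> Knot -> Knot)
  (J : Knot -> nat -> laurent)
  (J_nz : forall (K : Knot) (n : nat), (0 < n)%N -> laurent_nz (J K n))
  (J_quasi : forall K : Knot, quadratic_quasi_poly (fun n => maxdeg (J K n)))
  (J_mul : forall (K1 K2 : Knot) (n : nat), (0 < n)%N ->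
     laurent_eq (J (connected_sum K1 K2) n) (laurent_mul (J K1 n) (J K2 n)))
  (K1 K2 : Knot) (r : R) :
  js (J (connected_sum K1 K2)) r ->
  exists r1 r2 : R, [/\ js (J K1) r1, js (J K2) r2 & r = r1 + r2].
Proof.
move=> hr.
have [L1 [a1 [C1 [L10 pa1 pC1 hb1]]]] := @knot_bound R _ (J_quasi K1).
have [L2 [a2 [C2 [L20 pa2 pC2 hb2]]]] := @knot_bound R _ (J_quasi K2).
apply: (@key R (fun n => (4 * maxdeg (J (connected_sum K1 K2) n))%:~R / n%:R ^+ 2) (fun n => (4 * maxdeg (J K1 n))%:~R / n%:R ^+ 2) (fun n => (4 * maxdeg (J K2 n))%:~R / n%:R ^+ 2) a1 a2 C1 C2 (L1 * L2)%N r _ _ _ _ _ hb1 hb2 _ hr).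
- by rewrite muln_gt0 L10 L20.
- by move=> n; rewrite (@per_dvd _ _ _ _ pa1) // dvdn_mulr.
- by move=> n; rewrite (@per_dvd _ _ _ _ pC1) // dvdn_mulr.
- by move=> n; rewrite (@per_dvd _ _ _ _ pa2) // dvdn_mull.
- by move=> n; rewrite (@per_dvd _ _ _ _ pC2) // dvdn_mull.
move=> n n0 /=.
rewrite (@maxdeg_mul _ _ _ (J_nz _ _ n0) (J_nz _ _ n0) (J_nz _ _ n0) (J_mul _ _ _ n0)).
by rewrite mulrDr intrD mulrDl.
Qed.
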